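(* Let $N\ge1$, $k>0$, $\gamma>0$, and let all $N$ channels have the same SNR $\gamma$. Define $\bar\Delta^*_{\mathrm{CS}}=\inf_{n>0}\bar\Delta_{\mathrm{CS}}(n)$, $\bar\Delta^*_{\mathrm{MP}}=\inf_{n>0}\left[\frac{n(1+\epsilon_{\mathrm{SC}}(n))}{2N(1-\epsilon_{\mathrm{SC}}(n))}+n\right]$, and $\bar\Delta^*_{\mathrm{PD}}=\inf_{n>0}\bar\Delta_{\mathrm{PD}}(n)$. Then $$\bar\Delta^*_{\mathrm{CS}}\le\bar\Delta^*_{\mathrm{MP}}\le\bar\Delta^*_{\mathrm{PD}}.$$
   Context: Let $Q(x)=\frac{1}{\sqrt{2\pi}}\int_x^\infty e^{-t^2/2}dt$ and for blocklength $n>0$, message size $k$ bits and SNR $\gamma>0$ let $\epsilon(n,k,\gamma)=Q\!\left(\frac{\frac12\log_2(1+\gamma)-\frac kn}{\log_2(e)\sqrt{\frac{1}{2n}\left(1-\frac{1}{(1+\gamma)^2}\right)}}\right)$ (variables treated as continuous). With $N$ channels of common SNR $\gamma$: single-channel error $\epsilon_{\mathrm{SC}}(n)=\epsilon(n,k,\gamma)$; packet duplication error $\epsilon_{\mathrm{PD}}(n)=\epsilon(n,k,\gamma)^N$; codeword splitting error (one codeword split into $N$ fragments of length $n$ sent in parallel) $\epsilon_{\mathrm{CS}}(n)=Q\!\left(\frac{\sum_{i=1}^N\frac12\log_2(1+\gamma)-\frac kn}{\log_2(e)\sqrt{\frac{1}{2n}\sum_{i=1}^N\left(1-\frac{1}{(1+\gamma)^2}\right)}}\right)$.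 For $\chi\in\{\mathrm{PD},\mathrm{CS}\}$, $\bar\Delta_\chi(n)=\frac{n(1+\epsilon_\chi(n))}{2(1-\epsilon_\chi(n))}+n$, the time-average Age of Information of the scheme that every $n$ time units generates a fresh update and delivers it $n$ time units later, successfully with probability $1-\epsilon_\chi(n)$ independently. The expression $\frac{n(1+\epsilon_{\mathrm{SC}}(n))}{2N(1-\epsilon_{\mathrm{SC}}(n))}+n$ is the time-average AoI of the multiplexing scheme (each of the $N$ channels periodically sends a fresh update with blocklength $n$, with offsets $\delta_i=in/N$) with optimal offsets. *)

(* Defs.v *)
From Stdlib Require Import Reals.
From Coquelicot Require Import Coquelicot.
Open Scope R_scope.

Definition Qf (x : R) : R :=
  / sqrt (2 * PI) *
  RInt_gen (fun t => exp (- t ^ 2 / 2)) (at_point x) (Rbar_locally p_infty).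

Definition log2 (x : R) : R := ln x / ln 2.
Definition log2e : R := / ln 2.

(* normal-approximation error for blocklength n, k bits, SNR g *)
Definition eps (n k g : R) : R :=
  Qf ((/2 * log2 (1 + g) - k / n) /
      (log2e * sqrt (/ (2 * n) * (1 - / (1 + g) ^ 2)))).

Definition eps_SC (k g n : R) : R := eps n k g.
Definition eps_PD (N : nat) (k g n : R) : R := (eps n k g) ^ N.

(* codeword splitting over channels 0..N-1 with SNRs gs i *)
Definition eps_CS (N : nat) (k : R) (gs : nat -> R) (n : R) : R :=
  Qf ((sum_n (fun i => /2 * log2 (1 + gs i)) (N - 1) - k / n) /
      (log2e * sqrt (/ (2 * n) * sum_n (fun i => 1 - / (1 + gs i) ^ 2) (N - 1)))).

(* time-average AoI for success probability 1 - e *)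
Definition aoi (n e : R) : R := n * (1 + e) / (2 * (1 - e)) + n.

Definition aoi_MP (N : nat) (k g n : R) : R :=
  n * (1 + eps_SC k g n) / (2 * INR N * (1 - eps_SC k g n)) + n.

Definition inf_pos (f : R -> R) : Rbar :=
  Glb_Rbar (fun y => exists n, 0 < n /\ y = f n).

Definition aoi_CS_opt (N : nat) (k g : R) : Rbar :=
  inf_pos (fun n => aoi n (eps_CS N k (fun _ => g) n)).
Definition aoi_MP_opt (N : nat) (k g : R) : Rbar :=
  inf_pos (fun n => aoi_MP N k g n).
Definition aoi_PD_opt (N : nat) (k g : R) : Rbar :=
  inf_pos (fun n => aoi n (eps_PD N k g n)).

(* Main.v *)
Require Import Defs.
From Stdlib Require Import Reals Lra Lia.
From Coquelicot Require Import Coquelicot.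
From HB Require Import structures.
From mathcomp Require all_boot all_order all_algebra all_classical all_reals all_analysis measurable_realfun Rstruct Rstruct_topology.

Module MC.
Import all_boot all_order all_algebra all_classical all_reals all_analysis measurable_realfun Rstruct Rstruct_topology.
Import Order.TTheory GRing.Theory Num.Theory numFieldNormedType.Exports.
Local Open Scope classical_set_scope.
Local Open Scope ring_scope.
Notation RR := (Real.sort RbaseSymbolsImpl_R__canonical__reals_Real).

Lemma RcosE_aux (x y : R) : cos_in (Rsqr x) y -> series (cos_coeff' x) @ \oo --> y.
Proof.
rewrite /cos_in /infinite_sum => cos_ub.
  rewrite -cvg_shiftS /=; apply/(@cvgrPdist_lt _ R^o) => /= e /RltP /cos_ub[N Nub].
  near=> n.
  have nN : (n >= N)%coq_nat by apply/ssrnat.leP; near: n; exact: nbhs_infty_ge.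
  move: Nub => /(_ _ nN) /[!RdistE] /RltP /=.
  rewrite distrC sum_f_R0E; congr (`| _ - _ | < e).
  apply: eq_bigr=> k _; rewrite /cos_coeff' /cos_n RdivE RpowE INRE factE.
  rewrite /Rsqr !RpowE !RmultE -expr2 -exprM exprnP.
  rewrite (_ : (2 * k)%coq_nat = k.*2); last by rewrite -mul2n.
  have -> : (-1)%coqR = -1 :> R by [].
  by rewrite mulrAC mul2n; congr (_ * _ / _).
Unshelve. all: by end_near. Qed.

Lemma RcosE (x : R) : Rtrigo_def.cos x = trigo.cos x.
Proof.
rewrite /Rtrigo_def.cos; case: exist_cos => y /RcosE_aux H1.
have H2 : series (cos_coeff' x) @ \oo --> trigo.cos x := @cvg_cos_coeff' R x.
exact: (cvg_unique (@Rhausdorff R) H1 H2).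
Qed.

Lemma two_E : (2%coqR : R) = 2.
Proof. by rewrite IZRposE INRE. Qed.
Lemma pi_le_PI : (pi : R) <= PI.
Proof.
rewrite leNgt; apply/negP => H.
have P0 : (0 : R) < PI by apply/RltP; exact: PI_RGT_0.
have : 0 < trigo.cos (PI / 2 : R).
  apply: cos_gt0_pihalf; apply/andP; split.
    rewrite RdivE two_E; apply: (@lt_trans _ _ 0); last by rewrite divr_gt0.
    by rewrite oppr_lt0 divr_gt0 // pi_gt0.
  by rewrite RdivE two_E ltr_pM2r.
by rewrite -RcosE cos_PI2 ltxx.
Qed.

Lemma bridge (f : RR -> RR) (x l : RR) : derivable_pt_lim f x l ->
  is_derive x (1:RR) f l.
Proof.
move=> Hd.
have H : (fun h : RR => h^-1 *: ((f \o shift x) (h *: (1:RR)) - f x)) @ 0^' --> l.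
  apply/(@cvgrPdist_lt _ R^o) => e /RltP e0.
  have [[d dpos] Hdd] := Hd e e0.
  rewrite near_withinE; exists d => /=; first by apply/RltP.
  move=> h /= hb hn0.
  have hn : h <> 0%coqR by apply/eqP.
  have hd : (Rabs h < d)%coqR by apply/RltP; rewrite RabsE -normrN -[X in `|X|]add0r.
  have := Hdd h hn hd; rewrite RabsE RdivE RminusE => /RltP.
  rewrite distrC (_ : h%:A = h :> RR); last by rewrite -[RHS]mulr1.
  have -> : h^-1 *: (f (h + x) - f x) = (f (x + h) - f x) / h :> RR.
    by rewrite [h + x]addrC -[h^-1 *: _]/(h^-1 * (f (x + h) - f x)) mulrC.
  by [].
split; first by apply/cvg_ex; exists l.
exact: cvg_lim H.
Qed.

Lemma A_mc (F : RR -> RR) :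
  (forall x, derivable_pt_lim F x (Rtrigo_def.exp (- (x ^ 2)))) ->
  forall a b : RR, a < b -> F b - F a <= Num.sqrt (PI : RR).
Proof.
move=> HF a b ab.
have dF : forall x : RR, is_derive x (1:RR) F (gauss_fun x).
  move=> x; have := bridge _ _ _ (HF x).
  by rewrite RexpE RoppE RpowE.
have cF : forall x : RR, {for x, continuous F}.
  move=> x; apply: differentiable_continuous; apply/derivable1_diffP.
  by case: (dF x).
have FTC := @continuous_FTC2 _ gauss_fun F a b ab.
have E : (\int[lebesgue_measure]_(x in `[a, b]) (gauss_fun x)%:E)%E =
   ((F b)%:E - (F a)%:E)%E.
  apply: FTC.
  - by apply: continuous_subspaceT; exact: continuous_gauss_fun.
  - split.
    + by move=> x _; case: (dF x).
    + exact: cvg_at_right_filter (cF a).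
    + exact: cvg_at_left_filter (cF b).
  - by move=> x _; rewrite derive1E; case: (dF x).
have le1 : (\int[lebesgue_measure]_(x in `[a, b]) (gauss_fun x)%:E
   <= \int[lebesgue_measure]_x (gauss_fun x)%:E)%E.
  apply: ge0_subset_integral => //=.
  - by apply/measurable_EFinP; exact: measurable_gauss_fun.
  - by move=> x _; rewrite lee_fin gauss_fun_ge0.
rewrite integralT_gauss E -EFinB lee_fin in le1.
apply: (le_trans le1); rewrite ler_sqrt; first exact: pi_le_PI.
by apply/RleP; apply: Rlt_le; exact: PI_RGT_0.
Qed.

Lemma A_std (F : R -> R) : (forall x, derivable_pt_lim F x (Rtrigo_def.exp (-(x^2)))) ->
  forall a b, (a < b)%coqR -> (F b - F a <= sqrt PI)%coqR.
Proof.
move=> HF a b /RltP ab; apply/RleP; rewrite RsqrtE; exact: A_mc.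
Qed.

End MC.

Open Scope R_scope.

Definition g2 (t : R) := exp (-(t^2)).
Definition g (t : R) := exp (- t ^ 2 / 2).

Lemma g2_cont x : continuous g2 x.
Proof. apply (@ex_derive_continuous R_AbsRing R_NormedModule g2); unfold g2; auto_derive; trivial. Qed.
Lemma g_cont x : continuous g x.
Proof. apply (@ex_derive_continuous R_AbsRing R_NormedModule g); unfold g; auto_derive; trivial. Qed.
Lemma g2_ex a b : ex_RInt g2 a b.
Proof. apply (@ex_RInt_continuous R_CompleteNormedModule); intros z _; apply g2_cont. Qed.
Lemma g_ex a b : ex_RInt g a b.
Proof. apply (@ex_RInt_continuous R_CompleteNormedModule); intros z _; apply g_cont. Qed.

Lemma g2_bound a b : a < b -> RInt g2 a b <= sqrt PI.
Proof.
intros ab.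
assert (H := MC.A_std (fun x => RInt g2 0 x)).
assert (E : RInt g2 a b = RInt g2 0 b - RInt g2 0 a).
{ assert (C : RInt g2 0 a + RInt g2 a b = RInt g2 0 b) by
    exact (RInt_Chasles g2 0 a b (g2_ex _ _) (g2_ex _ _)).
  lra. }
rewrite E; apply H; auto.
intros x; apply is_derive_Reals.
apply (is_derive_RInt g2 _ 0 x); [|apply g2_cont].
apply filter_forall; intros y; apply (@RInt_correct R_CompleteNormedModule); apply g2_ex.
Qed.

Lemma g_bound a b : a < b -> RInt g a b <= sqrt (2 * PI).
Proof.
intros ab.
assert (s2 : 0 < sqrt 2) by (apply sqrt_lt_R0; lra).
assert (E : RInt g a b = sqrt 2 * RInt g2 (a / sqrt 2) (b / sqrt 2)).
{ rewrite <- (RInt_scal g2).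
  2: apply g2_ex.
  rewrite (RInt_ext (fun x => scal (sqrt 2) (g2 x)) (fun y => scal (sqrt 2) (g (sqrt 2 * y + 0)))).
  - rewrite (@RInt_comp_lin R_CompleteNormedModule). 2: apply g_ex.
    f_equal; field; lra.
  - intros x _; unfold g, g2, scal; simpl; unfold mult; simpl.
    f_equal; f_equal.
    assert (HH : forall y : R, - (y * (y*1)) = - ((sqrt 2 * y + 0) * ((sqrt 2 * y + 0) * 1)) / 2).
    { intros y. replace (- ((sqrt 2 * y + 0) * ((sqrt 2 * y + 0) * 1)) / 2) with (- (sqrt 2 * sqrt 2) * (y*y) / 2) by (unfold Rdiv; ring).
      rewrite sqrt_sqrt by lra. field. }
    apply HH. }
rewrite E, sqrt_mult by (try lra; apply Rlt_le, PI_RGT_0).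
apply Rmult_le_compat_l; [lra|].
apply g2_bound.
apply Rmult_lt_compat_r; [apply Rinv_0_lt_compat; lra | lra].
Qed.

Lemma Qf_bounds x : 0 <= Qf x < 1.
Proof.
set (S := sqrt (2 * PI)).
assert (HS : 0 < S) by (apply sqrt_lt_R0; generalize PI_RGT_0; lra).
set (c := RInt g (x - 1) x).
assert (Hc : 0 < c).
{ apply RInt_gt_0; [lra| |].
  - intros; unfold g; apply exp_pos.
  - intros; apply g_cont. }
assert (HcS : c <= S) by (apply g_bound; lra).
set (G := fun b => RInt g x b).
assert (Gub : forall b, x <= b -> G b <= S - c).
{ intros b Hb. destruct (Rle_lt_or_eq_dec _ _ Hb) as [Hlt|Heq].
  - assert (C : c + G b = RInt g (x - 1) b) by
      exact (RInt_Chasles g (x - 1) x b (g_ex _ _) (g_ex _ _)).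
    assert (RInt g (x - 1) b <= S) by (apply g_bound; lra). lra.
  - subst b; unfold G; rewrite RInt_point; unfold zero; simpl; lra. }
assert (Gmono : forall b0 b, b0 <= b -> G b0 <= G b).
{ intros b0 b Hb.
  assert (C : G b0 + RInt g b0 b = G b) by
      exact (RInt_Chasles g x b0 b (g_ex _ _) (g_ex _ _)).
  assert (0 <= RInt g b0 b).
  { apply RInt_ge_0; [lra | apply g_ex | intros; left; unfold g; apply exp_pos]. }
  lra. }
assert (G0 : G x = 0) by (unfold G; rewrite RInt_point; reflexivity).
set (E := fun y => exists b, x <= b /\ y = G b).
destruct (completeness E) as [l [Hub Hleast]].
{ exists (S - c); intros y [b [Hb ->]]; apply Gub; exact Hb. }
{ exists 0; exists x; split; [lra | auto]. }
assert (l0 : 0 <= l) by (apply Hub; exists x; split; [lra | auto]).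
assert (lS : l <= S - c).
{ apply Hleast; intros y [b [Hb ->]]; apply Gub; exact Hb. }
assert (Hgen : is_RInt_gen g (at_point x) (Rbar_locally p_infty) l).
{ intros P [eps HP].
  destruct (Classical_Prop.classic (exists b0, x <= b0 /\ l - eps < G b0)) as [[b0 [Hb0 Hlt]]|Hn].
  2: { exfalso.
       assert (l <= l - eps).
       { apply Hleast; intros y [b [Hb ->]].
         destruct (Rle_lt_dec (G b) (l - eps)) as [h|h]; auto.
         exfalso; apply Hn; exists b; split; auto. }
       destruct eps as [e epos]; simpl in *; lra. }
  apply (Filter_prod _ _ _ (fun u => u = x) (fun b => Rmax x b0 < b)).
  - reflexivity.
  - exists (Rmax x b0); auto.
  - intros u b Hu Hb; simpl; subst u.
    assert (Hxb : x <= b) by (generalize (Rmax_l x b0); lra).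
    assert (Hb0b : b0 <= b) by (generalize (Rmax_r x b0); lra).
    exists (G b); split.
    + apply (@RInt_correct R_CompleteNormedModule); apply g_ex.
    + apply HP.
      assert (G b <= l) by (apply Hub; exists b; split; auto).
      assert (G b0 <= G b) by (apply Gmono; auto).
      unfold ball; simpl; unfold AbsRing_ball, abs, minus, plus, opp; simpl.
      apply Rabs_def1; lra. }
unfold Qf.
replace (RInt_gen (fun t => exp (- t ^ 2 / 2)) (at_point x) (Rbar_locally p_infty)) with l
  by (symmetry; exact (is_RInt_gen_unique g l Hgen)).
fold S.
assert (/ S * l <= / S * (S - c)).
{ apply Rmult_le_compat_l; [left; apply Rinv_0_lt_compat; auto | auto]. }
assert (/ S * (S - c) = 1 - c / S) by (field; lra).
assert (0 < c / S) by (apply Rdiv_lt_0_compat; auto).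
split.
- apply Rmult_le_pos; [left; apply Rinv_0_lt_compat; auto | auto].
- lra.
Qed.

From Stdlib Require Import Lia.

Lemma glb_le (f h : R -> R) :
  (forall n, 0 < n -> exists m, 0 < m /\ f m <= h n) ->
  Rbar_le (inf_pos f) (inf_pos h).
Proof.
intros H. unfold inf_pos.
destruct (Glb_Rbar_correct (fun y => exists n, 0 < n /\ y = f n)) as [Hlb _].
destruct (Glb_Rbar_correct (fun y => exists n, 0 < n /\ y = h n)) as [_ Hgr].
apply Hgr. intros y [n [Hn ->]].
destruct (H n Hn) as [m [Hm Hle]].
apply Rbar_le_trans with (Finite (f m)).
- apply Hlb. exists m; split; auto.
- simpl; exact Hle.
Qed.

Lemma key1 (e : R) (N : nat) : 0 <= e <= 1 -> 1 - e ^ N >= INR N * e ^ N * (1 - e).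
Proof.
intros He. induction N as [|N IH].
- simpl; lra.
- rewrite S_INR. simpl.
  assert (0 <= e ^ N) by (apply pow_le; lra).
  assert (e * e ^ N <= e ^ N) by nra.
  assert (0 <= INR N) by apply pos_INR.
  assert (0 <= (INR N + 1) * (1 - e) * (e ^ N - e * e ^ N)).
  { apply Rmult_le_pos; [apply Rmult_le_pos|]; lra. }
  nra.
Qed.

Lemma key2 (e : R) (N : nat) : 0 <= e <= 1 -> (1 <= N)%nat ->
  (1 + e) * (1 - e ^ N) <= INR N * (1 - e) * (1 + e ^ N).
Proof.
intros He HN. induction HN as [|N HN IH].
- simpl; lra.
- rewrite S_INR. simpl.
  assert (0 <= e ^ N) by (apply pow_le; lra).
  assert (K := key1 e N He).
  assert (0 <= INR N) by apply pos_INR.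
  assert (e * e ^ N <= e ^ N) by nra.
  nra.
Qed.

Lemma ln2_pos : 0 < ln 2.
Proof. generalize ln_lt_2; lra. Qed.

Theorem theorem2 (N : nat) (k gamma : R) :
  (1 <= N)%nat -> 0 < k -> 0 < gamma ->
  Rbar_le (aoi_CS_opt N k gamma) (aoi_MP_opt N k gamma) /\
  Rbar_le (aoi_MP_opt N k gamma) (aoi_PD_opt N k gamma).
Proof.
intros HN Hk Hg.
assert (HNr : 1 <= INR N) by (apply (le_INR 1); exact HN).
split.
- apply glb_le. intros n Hn. exists (n / INR N). split.
  { apply Rdiv_lt_0_compat; lra. }
  assert (Heq : eps_CS N k (fun _ => gamma) (n / INR N) = eps_SC k gamma n).
  { unfold eps_CS, eps_SC, eps.
    rewrite !sum_n_const.
    replace (S (N - 1)) with N by lia.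
    f_equal.
    set (A := / 2 * log2 (1 + gamma)).
    set (V := 1 - / (1 + gamma) ^ 2).
    assert (HV : 0 < V).
    { unfold V. assert (1 < (1 + gamma) ^ 2) by nra.
      assert (/ (1 + gamma) ^ 2 < 1).
      { rewrite <- Rinv_1. apply Rinv_lt_contravar; lra. }
      lra. }
    assert (Hs : / (2 * (n / INR N)) * (INR N * V) = (INR N * INR N) * (/ (2 * n) * V))
      by (field; lra).
    rewrite Hs, sqrt_mult, sqrt_square by (try lra; apply Rle_0_sqr || (apply Rmult_le_pos; [left; apply Rinv_0_lt_compat; lra | lra])).
    assert (0 < sqrt (/ (2 * n) * V)).
    { apply sqrt_lt_R0. apply Rmult_lt_0_compat; [apply Rinv_0_lt_compat; lra | lra]. }
    assert (log2e <> 0) by (unfold log2e; apply Rinv_neq_0_compat; generalize ln2_pos; lra).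
    field. repeat split; lra. }
  unfold aoi, aoi_MP. rewrite Heq.
  destruct (Qf_bounds ((/ 2 * log2 (1 + gamma) - k / n) /
      (log2e * sqrt (/ (2 * n) * (1 - / (1 + gamma) ^ 2))))) as [e0 e1].
  unfold eps_SC, eps.
  set (e := Qf _) in *.
  assert (n / INR N * (1 + e) / (2 * (1 - e)) = n * (1 + e) / (2 * INR N * (1 - e))) as ->
    by (field; repeat split; lra).
  assert (n / INR N <= n).
  { unfold Rdiv. rewrite <- (Rmult_1_r n) at 2. apply Rmult_le_compat_l; [lra|].
    rewrite <- Rinv_1. apply Rinv_le_contravar; lra. }
  lra.
- apply glb_le. intros n Hn. exists n. split; auto.
  unfold aoi, aoi_MP, eps_PD, eps_SC.
  destruct (Qf_bounds ((/ 2 * log2 (1 + gamma) - k / n) /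
      (log2e * sqrt (/ (2 * n) * (1 - / (1 + gamma) ^ 2))))) as [e0 e1].
  unfold eps.
  set (e := Qf _) in *.
  assert (HE : 0 <= e ^ N < 1) by (apply pow_lt_1_compat; [lra | lia]).
  assert (D := key2 e N ltac:(lra) HN).
  assert (Hd : n * (1 + e ^ N) / (2 * (1 - e ^ N)) + n - (n * (1 + e) / (2 * INR N * (1 - e)) + n)
            = n * (INR N * (1 - e) * (1 + e ^ N) - (1 + e) * (1 - e ^ N)) / (2 * INR N * (1 - e) * (1 - e ^ N)))
    by (field; repeat split; lra).
  assert (0 <= n * (INR N * (1 - e) * (1 + e ^ N) - (1 + e) * (1 - e ^ N)) / (2 * INR N * (1 - e) * (1 - e ^ N))).
  { apply Rmult_le_pos. apply Rmult_le_pos; lra.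
    left; apply Rinv_0_lt_compat.
    apply Rmult_lt_0_compat; [|lra]. apply Rmult_lt_0_compat; [|lra]. lra. }
  lra.
Qed.
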